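(* Let $E$, $F$ be locally convex spaces and let $\phi_{1},\phi_{2}:E\times F\to\overline{\mathbb{R}}$ be proper convex functions. Define $\rho:E\times F\to\overline{\mathbb{R}}$ by $\rho(x,y):=\inf\{\phi_{1}(x,y_{1})+\phi_{2}(x,y_{2})\mid y_{1}+y_{2}=y\}$. Assume there exists $(x_{0},y_{0})\in\operatorname{dom}\phi_{2}$ such that $x_{0}\in\operatorname{Pr}_{E}(\operatorname{dom}\phi_{1})$ and $\phi_{2}(\cdot,y_{0})$ is continuous at $x_{0}$. Then for every $x^{*}\in E^{*}$, $y^{*}\in F^{*}$, \[\rho^{*}(x^{*},y^{*})=\min\{\phi_{1}^{*}(x_{1}^{*},y^{*})+\phi_{2}^{*}(x_{2}^{*},y^{*})\mid x_{1}^{*},x_2^*\in E^*,\ x_{1}^{*}+x_{2}^{*}=x^{*}\},\] where ''$\min$'' denotes an infimum that is attained when it is finite.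
   Context: Locally convex spaces are Hausdorff; $E^*,F^*$ are topological duals and the conjugate of $f:E\times F\to\overline{\mathbb R}$ is $f^*(x^*,y^* )=\sup\{\langle x,x^*\rangle+\langle y,y^*\rangle-f(x,y)\}$. $\operatorname{dom}\phi=\{\phi<\infty\}$; $\operatorname{Pr}_E$ is the projection onto $E$; proper means not identically $+\infty$ and never $-\infty$. *)

(* Defs.v *)
From HB Require Import structures.
From mathcomp Require Import all_boot all_order all_algebra.
From mathcomp Require Import all_classical all_reals all_analysis.
Set Implicit Arguments. Unset Strict Implicit. Unset Printing Implicit Defensive.
Import Order.TTheory GRing.Theory Num.Theory.
Import numFieldTopology.Exports numFieldNormedType.Exports.
Local Open Scope classical_set_scope.
Local Open Scope ring_scope.

Definition is_dual (R : realType) (E : tvsType R) (f : E -> R) : Prop :=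
  (forall (a : R) (u v : E), f (a *: u + v) = a * f u + f v) /\ continuous f.

Definition proper_fun (T : Type) (R : realType) (f : T -> \bar R) : Prop :=
  (exists p, (f p < +oo)%E) /\ (forall p, (-oo < f p)%E).

Definition convex_ext (R : realType) (E F : tvsType R) (f : E * F -> \bar R) :=
  forall (p q : E * F) (l : R), 0 < l < 1 ->
    (f ((l *: p.1 + (1 - l) *: q.1)%R, (l *: p.2 + (1 - l) *: q.2)%R)
      <= l%:E * f p + (1 - l)%R%:E * f q)%E.

Definition conj2 (R : realType) (E F : tvsType R) (f : E * F -> \bar R)
  (xs : E -> R) (ys : F -> R) : \bar R :=
  ereal_sup [set ((xs p.1 + ys p.2)%:E - f p)%E | p in [set: E * F]].

Definition infconv2 (R : realType) (E F : tvsType R) (phi1 phi2 : E * F -> \bar R)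
  (p : E * F) : \bar R :=
  ereal_inf [set z | exists y1 y2 : F,
                 (y1 + y2 = p.2)%R /\ z = (phi1 (p.1, y1) + phi2 (p.1, y2))%E].

(* Main.v *)
Require Import Defs.
From HB Require Import structures.
From mathcomp Require Import all_boot all_order all_algebra.
From mathcomp Require Import all_classical all_reals all_analysis.
From mathcomp Require Import ring lra.
Import Order.TTheory GRing.Theory Num.Theory.
Import numFieldTopology.Exports numFieldNormedType.Exports.
Local Open Scope classical_set_scope.
Local Open Scope ring_scope.
Set Implicit Arguments. Unset Strict Implicit. Unset Printing Implicit Defensive.

Section HB.
Variables (R : realType) (V : lmodType R) (p : V -> R).
Hypothesis padd : forall x y, p (x + y) <= p x + p y.
Hypothesis phom : forall t x, 0 < t -> p (t *: x) <= t * p x.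

Let p0 : p 0 = 0.
Proof.
apply/eqP; rewrite eq_le; apply/andP; split.
  have := @phom (1/2) 0 (ltac:(by rewrite divr_gt0)); rewrite scaler0 => h.
  have : p 0 * (1 - 1/2) <= 0 by rewrite mulrBr mulr1 subr_le0 mulrC.
  by rewrite pmulr_lle0 // subr_gt0 ltr_pdivrMr // mul1r ltr1n.
by have := padd 0 0; rewrite addr0 -{1}(addr0 (p 0)) lerD2l.
Qed.

Let phomE t x : 0 < t -> p (t *: x) = t * p x.
Proof.
move=> t0; apply/eqP; rewrite eq_le phom //=.
have := @phom (t^-1) (t *: x); rewrite invr_gt0 t0 scalerA mulVf ?gt_eqF // scale1r.
by move=> /(_ isT); rewrite ler_pdivlMl.
Qed.

Definition HBP (G : set (V * R)) :=
  (forall a x r y s, G (x, r) -> G (y, s) -> G (a *: x + y, a * r + s)) /\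
  (forall x r, G (x, r) -> r <= p x).

Lemma hahn_banach : exists f : V -> R,
  (forall a u v, f (a *: u + v) = a * f u + f v) /\ (forall x, f x <= p x).
Proof.
have [A [[Acl Adom] Amax]] : exists A, HBP A /\ forall B, A `<` B -> ~ HBP B.
  apply: Zorn_bigcup => F FP Ftot; split.
    move=> a x r y s [X FX Xx] [Y FY Yy].
    have [XY|YX] := Ftot _ _ FX FY.
      by exists Y => //; apply: (proj1 (FP _ FY)) => //; apply: XY.
    by exists X => //; apply: (proj1 (FP _ FX)) => //; apply: YX.
  by move=> x r [X FX Xx]; apply: (proj2 (FP _ FX)).
have A0 : A (0, 0).
  have [[[x r] Axr]|A0] := pselect (exists q, A q).
    by have := Acl (-1) x r x r Axr Axr; rewrite scaleN1r mulN1r !addNr.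
  exfalso; apply: (Amax [set (0, 0)]).
    split; first by move=> q Aq; exfalso; apply: A0; exists q.
    by move=> /(_ (0,0)) h; apply: A0; exists (0,0); apply: h.
  split; first by move=> a x r y s [-> ->] [-> ->] /=; rewrite scaler0 mulr0 !addr0.
  by move=> x r [-> ->]; rewrite p0.
have Ainv x r t : 0 < t -> A (x, r) -> A (t^-1 *: x, t^-1 * r).
  by move=> t0 Axr; have := Acl (t^-1) x r 0 0 Axr A0; rewrite !addr0.
have ext z : exists c, A (z, c).
  pose L := [set u | exists y s, A (y, s) /\ u = s - p (y - z)].
  have L0 : L !=set0 by exists (0 - p (0 - z)), 0, 0.
  have Lub x r : A (x, r) -> ubound L (p (x + z) - r).
    move=> Axr _ [y [s [Ays ->]]].
    rewrite lerBrDr addrAC lerBlDr.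
    apply: (le_trans (y := p (x + y))).
      have := Acl 1 x r y s Axr Ays; rewrite scale1r mul1r => /Adom; lra.
    by apply: (le_trans _ (padd _ _)); rewrite addrACA subrr addr0.
  have Lhas : has_ubound L by exists (p (0 + z) - 0); apply: Lub.
  pose c := sup L.
  have cge u : L u -> u <= c by apply: ub_le_sup.
  have cle x r : A (x, r) -> c <= p (x + z) - r by move=> Axr; apply: ge_sup => //; apply: Lub.
  pose B := [set q | exists x r t, A (x, r) /\ q = (x + t *: z, r + t * c)].
  have HB : HBP B.
    split.
      move=> a _ _ _ _ [x [r [t [Axr [-> ->]]]]] [y [s [t' [Ays [-> ->]]]]].
      exists (a *: x + y), (a * r + s), (a * t + t'); split; first exact: Acl.
      congr pair; first by rewrite scalerDr scalerDl scalerA; rewrite addrACA.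
      by rewrite mulrDr mulrDl mulrA addrACA.
    move=> _ _ [x [r [t [Axr [-> ->]]]]].
    have [t0|t0|->] := ltgtP t 0; last by rewrite scale0r mul0r !addr0; apply: Adom.
      have t'0 : 0 < - t by rewrite oppr_gt0.
      have := cge _ (ex_intro _ _ (ex_intro _ _ (conj (Ainv _ _ _ t'0 Axr) erefl))).
      have e : (- t)^-1 *: x - z = (- t)^-1 *: (x + t *: z).
        by rewrite scalerDr scalerA invrN mulNr mulVf ?lt_eqF // scaleN1r.
      rewrite e phomE ?invr_gt0 // -mulrBr ler_pdivrMl // => h.
      nra.
    have := cle _ _ (Ainv _ _ _ t0 Axr).
    have e : t^-1 *: x + z = t^-1 *: (x + t *: z).
      by rewrite scalerDr scalerA mulVf ?gt_eqF // scale1r.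
    rewrite e phomE ?invr_gt0 // -mulrBr ler_pdivlMl // => h.
    nra.
  have AB : A `<=` B.
    by move=> [x r] Axr; exists x, r, 0; rewrite scale0r mul0r !addr0.
  have BA : B `<=` A.
    move=> q Bq; apply: contrapT => nAq; apply: (Amax B) => //; split => //.
    by move=> /(_ q Bq).
  by exists c; apply: BA; exists 0, 0, 1; rewrite scale1r mul1r !add0r.
have uniq z c c' : A (z, c) -> A (z, c') -> c = c'.
  move=> Ac Ac'; have h1 := Adom _ _ (Acl (-1) z c z c' Ac Ac').
  have h2 := Adom _ _ (Acl (-1) z c' z c Ac' Ac).
  move: h1 h2; rewrite scaleN1r addNr p0; lra.
pose f z := proj1_sig (cid (ext z)).
have Af z : A (z, f z) by rewrite /f; case: cid.
exists f; split; last by move=> x; apply: Adom; apply: Af.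
move=> a u v; apply: uniq (Af _) _.
exact: Acl (Af u) (Af v).
Qed.

End HB.

Lemma cone_sep (R : realType) (V : lmodType R) (G : set (V * R)) :
  (forall w s w' s' l, G (w, s) -> G (w', s') -> 0 < l < 1 ->
     G (l *: w + (1 - l) *: w', l * s + (1 - l) * s')) ->
  (forall s, G (0, s) -> 0 <= s) ->
  (forall x, exists t s, 0 < t /\ G (t *: x, s)) ->
  exists f : V -> R, (forall a u v, f (a *: u + v) = a * f u + f v) /\
    (forall w s, G (w, s) -> f w <= s).
Proof.
move=> Gcvx G0 Gabs.
pose P x := [set u | exists t s, 0 < t /\ G (t *: x, s) /\ u = s / t].
have comb x y u v : P x u -> P y v -> P (x + y) (u + v).
  move=> [t [s [t0 [Gt ->]]]] [t' [s' [t'0 [Gt' ->]]]].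
  have tt0 : 0 < t + t' by rewrite addr_gt0.
  pose l := t' / (t + t').
  have l01 : 0 < l < 1.
    by rewrite divr_gt0 //= ltr_pdivrMr // mul1r ltrDr.
  have := Gcvx _ _ _ _ l Gt Gt' l01.
  have e1 : 1 - l = t / (t + t').
    by rewrite /l -[1](divff (lt0r_neq0 tt0)) -mulrBl addrK.
  rewrite e1 !scalerA => Gc.
  exists (t * t' / (t + t')), (l * s + t / (t + t') * s'); split.
    by rewrite !mulr_gt0 // invr_gt0.
  split.
    rewrite scalerDr; congr (G (_ + _, _)) : Gc.
      by rewrite /l; congr (_ *: _); rewrite mulrC mulrA.
    by congr (_ *: _); rewrite mulrAC.
  rewrite /l; field.
  by rewrite !lt0r_neq0.
have Pne x : P x !=set0.
  by have [t [s [t0 Gts]]] := Gabs x; exists (s / t), t, s.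
have P0 u : P 0 u -> 0 <= u.
  by move=> [t [s [t0 [+ ->]]]]; rewrite scaler0 => /G0 s0; rewrite divr_ge0 // ltW.
have Plb x : has_lbound (P x).
  have [v Pv] := Pne (- x); exists (- v) => u Pu.
  by have := P0 _ (eq_ind _ (fun z => P z (u + v)) (comb _ _ _ _ Pu Pv) _ (subrr x)); lra.
pose p x := inf (P x).
have pP x u : P x u -> p x <= u by move=> Pu; apply: ge_inf.
have [f [flin fp]] : exists f : V -> R,
  (forall a u v, f (a *: u + v) = a * f u + f v) /\ (forall x, f x <= p x).
  apply: hahn_banach.
    move=> x y.
    have h1 : p (x + y) - p y <= p x.
      apply: lb_le_inf => // u Pu; rewrite lerBlDr.
      have h2 : p (x + y) - u <= p y.
        by apply: lb_le_inf => // v Pv; rewrite lerBlDr addrC; apply: pP; apply: comb.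
      lra.
    lra.
  move=> c x c0; rewrite -ler_pdivrMl //.
  apply: lb_le_inf => // _ [t [s [t0 [Gt ->]]]].
  rewrite ler_pdivrMl // mulrCA.
  apply: pP; exists (t / c), s; split; first by rewrite divr_gt0.
  split; first by rewrite scalerA mulrAC -mulrA mulfV ?gt_eqF // mulr1.
  by rewrite invf_div.
exists f; split => // w s Gws.
apply: (le_trans (fp w)); apply: pP; exists 1, s; split => //.
by rewrite scale1r divr1.
Qed.

Section Topo.
Variables (R : realType) (E : tvsType R).

Lemma affine_cont (c : R) (x : E) : (fun y : E => c *: (y - x)) @ x --> (0 : E).
Proof.
have -> : (0 : E) = c *: (x - x) by rewrite subrr scaler0.
have hB : (fun y : E => y + (- x)) @ x --> x + (- x).
  apply: (@continuous2_cvg _ _ _ _ _ _ _ _ (fun a b : E => a + b)).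
  - exact: (add_continuous (x, - x)).
  - exact: cvg_id.
  - exact: cvg_cst.
apply: (@continuous2_cvg _ R^o _ _ _ _ (fun _ => c) _ (fun (a : R^o) (b : E) => a *: b)).
- exact: (scale_continuous ((c : R^o), x - x)).
- exact: cvg_cst.
- exact: hB.
Qed.

Lemma absorbing (U : set E) : nbhs 0 U -> forall x : E, exists t : R, 0 < t /\ U (t *: x).
Proof.
move=> U0 x; have /= := scale_continuous ((0 : R^o), x) U.
rewrite scale0r => /(_ U0) [] /= B [B1 B2] BU.
move: B1 => /nbhs_ballP [e /= e0 He].
exists (e / 2); split; first by rewrite divr_gt0.
apply: (BU (e / 2 : R^o, x)); split => /=; last exact: nbhs_singleton.
apply: He; rewrite -ball_normE /= sub0r normrN gtr0_norm ?divr_gt0 //.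
by rewrite ltr_pdivrMr // ltr_pMr // ltr1n.
Qed.

Lemma lin_cont (f : E -> R) (K : R) :
  (forall a u v, f (a *: u + v) = a * f u + f v) ->
  (\forall w \near (0 : E), f w <= K) -> continuous f.
Proof.
move=> flin hK.
have f0 : f 0 = 0.
  by have := flin 1 0 0; rewrite scale1r addr0 mul1r; lra.
have fZ a u : f (a *: u) = a * f u by have := flin a u 0; rewrite addr0 f0 addr0.
have fB u v : f (u - v) = f u - f v.
  by rewrite -scaleN1r addrC flin mulN1r addrC.
have K0 : 0 <= K by rewrite -f0; apply: (nbhs_singleton hK).
move=> x; apply/cvgrPdist_le => e e0.
pose c := (K + 1) / e.
have c0 : 0 < c by rewrite divr_gt0 // ltr_wpDl.
have h1 := affine_cont c x hK.
have h2 := affine_cont (- c) x hK.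
have : \forall y \near x, f (c *: (y - x)) <= K /\ f (- c *: (y - x)) <= K.
  have h1' : \forall y \near x, f (c *: (y - x)) <= K by exact: h1.
  have h2' : \forall y \near x, f (- c *: (y - x)) <= K by exact: h2.
  by near=> y; split; [exact: (near h1' y) | exact: (near h2' y)].
apply: filterS => y []; rewrite !fZ !fB => a1 a2.
rewrite /c mulNr mulrAC lerNl in a2.
rewrite /c mulrAC in a1.
move: a1 a2; rewrite ler_pdivrMr // => a1; rewrite ler_pdivlMr // => a2.
rewrite distrC ler_norml; apply/andP; split; nra.
Unshelve. all: by end_near. Qed.
End Topo.

Section Main.
Variables (R : realType) (E F : tvsType R).

Lemma fin_of (g : \bar R) : (-oo < g)%E -> (g < +oo)%E -> exists r : R, g = r%:E.
Proof. by case: g => // r; exists r. Qed.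

Lemma dual_add (G : tvsType R) (f : G -> R) : is_dual f -> forall u v, f (u + v) = f u + f v.
Proof. by move=> [h _] u v; have := h 1 u v; rewrite scale1r mul1r. Qed.

Lemma dual0 (G : tvsType R) (f : G -> R) : is_dual f -> f 0 = 0.
Proof. by move=> h; have := dual_add h 0 0; rewrite addr0; lra. Qed.

Lemma dualZ (G : tvsType R) (f : G -> R) : is_dual f -> forall a u, f (a *: u) = a * f u.
Proof. by move=> h a u; have := h.1 a u 0; rewrite !addr0 dual0 // addr0. Qed.

Lemma dualB (G : tvsType R) (f : G -> R) : is_dual f -> forall u v, f (u - v) = f u - f v.
Proof. by move=> h u v; rewrite dual_add // -scaleN1r dualZ // mulN1r. Qed.

Lemma conj_ge (f : E * F -> \bar R) (a : E -> R) (b : F -> R) u y r :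
  f (u, y) = r%:E -> ((a u + b y - r)%:E <= conj2 f a b)%E.
Proof. by move=> e; apply: ereal_sup_ubound; exists (u, y) => //=; rewrite e. Qed.

Lemma conj_le (f : E * F -> \bar R) (a : E -> R) (b : F -> R) (M : \bar R) :
  (forall p, (-oo < f p)%E) ->
  (forall u y r, f (u, y) = r%:E -> ((a u + b y - r)%:E <= M)%E) ->
  (conj2 f a b <= M)%E.
Proof.
move=> ninf h; apply: ge_ereal_sup => _ [[u y] _ <-] /=.
have := ninf (u, y); case e: (f (u, y)) => [r| |] //= _.
  exact: h e.
by rewrite leNye.
Qed.

Lemma weak_dual (phi1 phi2 : E * F -> \bar R) (xs x1 x2 : E -> R) (ys : F -> R) :
  (forall p, (-oo < phi1 p)%E) -> (forall p, (-oo < phi2 p)%E) ->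
  (exists u y r, phi1 (u, y) = r%:E) -> (exists u y r, phi2 (u, y) = r%:E) ->
  is_dual x1 -> is_dual x2 -> is_dual ys -> (forall e, x1 e + x2 e = xs e) ->
  (conj2 (infconv2 phi1 phi2) xs ys <= conj2 phi1 x1 ys + conj2 phi2 x2 ys)%E.
Proof.
move=> ninf1 ninf2 [u1 [v1 [r1 e1]]] [u2 [v2 [r2 e2]]] d1 d2 dy hs.
have c1ninf := lt_le_trans (ltNyr _) (conj_ge x1 ys e1).
have c2ninf := lt_le_trans (ltNyr _) (conj_ge x2 ys e2).
case E1 : (conj2 phi1 x1 ys) c1ninf => [a1| |] // _; last by rewrite addye ?leey // -ltNye.
case E2 : (conj2 phi2 x2 ys) c2ninf => [a2| |] // _; last by rewrite addey ?leey.
apply: ge_ereal_sup => _ [[u y] _ <-] /=.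
have lb : ((xs u + ys y - a1 - a2)%:E <= infconv2 phi1 phi2 (u, y))%E.
  apply: le_ereal_inf_tmp => _ [y1 [y2 [/= sy ->]]].
  have := ninf1 (u, y1); case f1 : (phi1 (u, y1)) => [s1| |] // _; last first.
    by rewrite addye ?leey // -ltNye ninf2.
  have := ninf2 (u, y2); case f2 : (phi2 (u, y2)) => [s2| |] // _; last first.
    by rewrite addey ?leey.
  have h1 := conj_ge x1 ys f1; rewrite E1 lee_fin in h1.
  have h2 := conj_ge x2 ys f2; rewrite E2 lee_fin in h2.
  rewrite -EFinD lee_fin -sy dual_add // -hs; lra.
move: lb; case: (infconv2 phi1 phi2 (u, y)) => [r| |] //=.
  by rewrite !lee_fin; lra.
by rewrite leNye.
Qed.

End Main.


Lemma opp_tvs_cvg (R : realType) (E : tvsType R) (x0 : E) :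
  (fun w : E => x0 - w) @ (0 : E) --> x0.
Proof.
have hN : (fun w : E => - w) @ (0 : E) --> (- 0 : E).
  exact: (@opp_continuous _ (0 : E)).
rewrite oppr0 in hN.
have := @continuous2_cvg _ _ _ _ _ _ (fun _ : E => x0) (fun w : E => - w) (fun a b : E => a + b) x0 0.
rewrite addr0 => h; apply: h.

- by have := @add_continuous _ (x0, 0); rewrite /continuous_at /= addr0.
- exact: cvg_cst.
- exact: hN.
Qed.

Unset Implicit Arguments.
Theorem theorem4p2 (R : realType) (E F : tvsType R)
  (hE : hausdorff_space E) (hF : hausdorff_space F)
  (phi1 phi2 : E * F -> \bar R) :
  proper_fun phi1 -> proper_fun phi2 ->
  convex_ext phi1 -> convex_ext phi2 ->
  (exists (x0 : E) (y0 : F),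
      (phi2 (x0, y0) < +oo)%E /\
      (exists y : F, (phi1 (x0, y) < +oo)%E) /\
      (fun x : E => phi2 (x, y0)) @ x0 --> phi2 (x0, y0)) ->
  forall (xs : E -> R) (ys : F -> R), is_dual xs -> is_dual ys ->
    let S := [set z : \bar R | exists x1 x2 : E -> R,
                 [/\ is_dual x1, is_dual x2, (forall e, x1 e + x2 e = xs e) &
                     z = (conj2 phi1 x1 ys + conj2 phi2 x2 ys)%E]] in
    conj2 (infconv2 phi1 phi2) xs ys = ereal_inf S /\
    (ereal_inf S \is a fin_num -> S (ereal_inf S)).
Proof.
move=> [_ ninf1] [_ ninf2] cvx1 cvx2 [x0 [y0 [h20 [[y1 h10] hc]]]] xs ys dxs dys S.
have [r10 e10] := fin_of (ninf1 _) h10.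
have [r20 e20] := fin_of (ninf2 _) h20.
have weak z : S z -> (conj2 (infconv2 phi1 phi2) xs ys <= z)%E.
  move=> [x1 [x2 [d1 d2 hs ->]]]; apply: weak_dual => //.
    by exists x0, y1, r10.
  by exists x0, y0, r20.
have LS : (conj2 (infconv2 phi1 phi2) xs ys <= ereal_inf S)%E.
  by apply: le_ereal_inf_tmp => z; apply: weak.
have Lninf : (-oo < conj2 (infconv2 phi1 phi2) xs ys)%E.
  have rle : (infconv2 phi1 phi2 (x0, (y1 + y0)%R) <= (r10 + r20)%:E)%E.
    by apply: ereal_inf_lbound; exists y1, y0; split => //=; rewrite e10 e20.
  have := ereal_sup_ubound (ex_intro2 _ _ (x0, (y1 + y0)%R) I erefl :
    [set ((xs p.1 + ys p.2)%:E - infconv2 phi1 phi2 p)%E | p in [set: E * F]] _).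
  rewrite -/(conj2 _ _ _).
  move: rle; case: (infconv2 phi1 phi2 (x0, (y1 + y0)%R)) => [r| |] //= _ h.
    exact: lt_le_trans (ltNyr _) h.
  by apply: lt_le_trans h; rewrite addey.
case EL : (conj2 (infconv2 phi1 phi2) xs ys) Lninf LS => [l| |] // _ LS; last first.
  have -> : ereal_inf S = +oo%E by apply/eqP; rewrite eq_le leey.
  by split.
have key u ya r1 yb r2 : phi1 (u, ya) = r1%:E -> phi2 (u, yb) = r2%:E ->
    xs u + ys ya + ys yb - r1 - r2 <= l.
  move=> f1 f2.
  have rle : (infconv2 phi1 phi2 (u, (ya + yb)%R) <= (r1 + r2)%:E)%E.
    by apply: ereal_inf_lbound; exists ya, yb; split => //=; rewrite f1 f2.
  have := ereal_sup_ubound (ex_intro2 _ _ (u, (ya + yb)%R) I erefl :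
    [set ((xs p.1 + ys p.2)%:E - infconv2 phi1 phi2 p)%E | p in [set: E * F]] _).
  rewrite -/(conj2 _ _ _) EL /=.
  move: rle; case: (infconv2 phi1 phi2 (u, (ya + yb)%R)) => [r| |] //=.
  rewrite !lee_fin dual_add //; lra.
pose G := [set q : E * R | exists u ya r1 v yb r2, [/\ phi1 (u, ya) = r1%:E,
   phi2 (v, yb) = r2%:E, q.1 = u - v &
   r1 - ys ya + r2 - ys yb - xs v + l <= q.2]].
rewrite e20 in hc.
move/fine_cvgP: hc => [hfin hcv].
have /cvgrPdist_lt/(_ 1 ltr01) hn := hcv.
have N1 : \forall x \near x0, exists r, phi2 (x, y0) = r%:E /\ r < r20 + 1.
  near=> x.
  have hf : phi2 (x, y0) \is a fin_num by near: x.
  have hl : `|r20 - fine (phi2 (x, y0))| < 1 by near: x.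
  exists (fine (phi2 (x, y0))); split; first by rewrite fineK.
  move: hl; rewrite ltr_norml => /andP [? ?]; lra.
have N1' : \forall w \near (0 : E), exists r, phi2 (x0 - w, y0) = r%:E /\ r < r20 + 1.
  exact: (@opp_tvs_cvg _ _ x0 _ N1).
have /cvgrPdist_lt/(_ 1 ltr01) N2 := dxs.2 0.
pose K := r10 - ys y1 + (r20 + 1) - ys y0 - xs x0 + 1 + l.
have NG : \forall w \near (0 : E), exists s, G (w, s) /\ s <= K.
  near=> w.
  have [r [f2 r2lt]] : exists r, phi2 (x0 - w, y0) = r%:E /\ r < r20 + 1 by near: w.
  have xsw : `|xs 0 - xs w| < 1 by near: w.
  exists (r10 - ys y1 + r - ys y0 - xs (x0 - w) + l); split.
    exists x0, y1, r10, (x0 - w), y0, r; split => //=.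
    by rewrite opprB addrCA subrr addr0.
  move: xsw; rewrite dual0 // sub0r normrN ltr_norml dualB // => /andP [? ?].
  rewrite /K; lra.
have [f [flin fG]] : exists f : E -> R,
    (forall a u v, f (a *: u + v) = a * f u + f v) /\
    (forall w s, G (w, s) -> f w <= s).
  apply: cone_sep.
  - move=> w s w' s' lam [u [ya [r1 [v [yb [r2 [f1 f2 /= ew hs]]]]]]].
    move=> [u' [ya' [r1' [v' [yb' [r2' [f1' f2' /= ew' hs']]]]]]] hl.
    have c1 := cvx1 (u, ya) (u', ya') lam hl.
    have c2 := cvx2 (v, yb) (v', yb') lam hl.
    rewrite /= f1 f1' in c1; rewrite /= f2 f2' in c2.
    have [r1'' e1''] := fin_of (ninf1 _) (le_lt_trans c1 (ltry _)).
    have [r2'' e2''] := fin_of (ninf2 _) (le_lt_trans c2 (ltry _)).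
    rewrite e1'' -EFinM -EFinM -EFinD lee_fin in c1.
    rewrite e2'' -EFinM -EFinM -EFinD lee_fin in c2.
    exists (lam *: u + (1 - lam) *: u'), (lam *: ya + (1 - lam) *: ya'), r1''.
    exists (lam *: v + (1 - lam) *: v'), (lam *: yb + (1 - lam) *: yb'), r2''.
    split => //=.
      by rewrite ew ew' !scalerBr opprD addrACA.
    rewrite !(dual_add dys) !(dualZ dys) !(dual_add dxs) !(dualZ dxs).
    move: hl => /andP [l0 l1].
    rewrite -subr_ge0.
    set Q := r1 - ys ya + r2 - ys yb - xs v + l in hs.
    set Q' := r1' - ys ya' + r2' - ys yb' - xs v' + l in hs'.
    have m1 : 0 <= lam * (s - Q) by apply: mulr_ge0; rewrite ?subr_ge0 // ltW.
    have m2 : 0 <= (1 - lam) * (s' - Q') by apply: mulr_ge0; rewrite subr_ge0 // ltW.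
    have c1' : 0 <= lam * r1 + (1 - lam) * r1' - r1'' by rewrite subr_ge0.
    have c2' : 0 <= lam * r2 + (1 - lam) * r2' - r2'' by rewrite subr_ge0.
    set L := (X in 0 <= X).
    have -> : L = lam * (s - Q) + (1 - lam) * (s' - Q') +
      (lam * r1 + (1 - lam) * r1' - r1'') + (lam * r2 + (1 - lam) * r2' - r2'').
      rewrite /L /Q /Q'; ring.
    by do 3 (apply: addr_ge0 => //).
  - move=> s [u [ya [r1 [v [yb [r2 [f1 f2 /= ev hs]]]]]]].
    move/eqP: ev; rewrite eq_sym subr_eq0 => /eqP ev; subst v.
    have := key _ _ _ _ _ f1 f2; lra.
  - move=> x.
    have [t [t0 [s [Gs _]]]] := absorbing NG x.
    by exists t, s.
have fK : \forall w \near (0 : E), f w <= K.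
  by apply: filterS NG => w [s [Gs sK]]; apply: le_trans (fG _ _ Gs) sK.
have df : is_dual f by split => //; apply: lin_cont flin fK.
pose x2 := fun e => xs e - f e.
have dx2 : is_dual x2.
  split.
    by move=> a u v; rewrite /x2 (proj1 dxs) flin; ring.
  by move=> x; apply: cvgB; [exact: (proj2 dxs) | exact: (proj2 df)].
have Hpair u ya r1 v yb r2 : phi1 (u, ya) = r1%:E -> phi2 (v, yb) = r2%:E ->
    (f u + ys ya - r1) + (x2 v + ys yb - r2) <= l.
  move=> f1 f2.
  have := fG (u - v) (r1 - ys ya + r2 - ys yb - xs v + l).
  rewrite dualB // /x2 => h.
  have : f u - f v <= r1 - ys ya + r2 - ys yb - xs v + l.
    by apply: h; exists u, ya, r1, v, yb, r2; split.
  lra.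
have c1le v yb r2 : phi2 (v, yb) = r2%:E ->
    (conj2 phi1 f ys <= (l - (x2 v + ys yb - r2))%:E)%E.
  move=> f2; apply: conj_le => // u ya r1 f1.
  by rewrite lee_fin; have := Hpair _ _ _ _ _ _ f1 f2; lra.
have [a ea] := fin_of (lt_le_trans (ltNyr _) (conj_ge f ys e10))
                      (le_lt_trans (c1le _ _ _ e20) (ltry _)).
have c2le : (conj2 phi2 x2 ys <= (l - a)%:E)%E.
  apply: conj_le => // v yb r2 f2.
  by have := c1le _ _ _ f2; rewrite ea !lee_fin; lra.
have Sz : S (conj2 phi1 f ys + conj2 phi2 x2 ys)%E.
  exists f, x2; split => //.
  by move=> e; rewrite /x2 addrC subrK.
have zle : (conj2 phi1 f ys + conj2 phi2 x2 ys <= l%:E)%E.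
  move: c2le; rewrite ea; case: (conj2 phi2 x2 ys) => [b| |] //=.
    by rewrite !lee_fin; lra.
  by move=> _; rewrite addeNy leNye.
have infE : ereal_inf S = l%:E.
  apply/eqP; rewrite eq_le LS andbT.
  exact: le_trans (ereal_inf_lbound Sz) zle.
split => // _.
have -> : ereal_inf S = (conj2 phi1 f ys + conj2 phi2 x2 ys)%E.
  apply/eqP; rewrite eq_le ereal_inf_lbound //= infE zle.
  by [].
exact: Sz.
Unshelve. all: by end_near.
Qed.
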